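(* Let $A\in\mathbb{C}^{2n\times 2n}$ be Hamiltonian and let $f:\mathcal{M}\to\mathbb{R}_{\ge0}$, $f(Z)=\|\operatorname{diag}(Z^HAZ)\|_F^2=\sum_{j=1}^{2n}|\langle AZe_j,Ze_j\rangle|^2$, where $\mathcal{M}\subset\mathbb{C}^{2n\times 2n}$ is the manifold of unitary symplectic matrices. Then for every $Z\in\mathcal{M}$, $$\operatorname{grad} f(Z)=ZX$$ for some matrix $X\in\mathbb{C}^{2n\times 2n}$ which is skew-Hermitian and Hamiltonian and has zero diagonal.
   Context: $J=J_{2n}=\begin{bmatrix}0&I_n\\-I_n&0\end{bmatrix}$; $A$ is Hamiltonian if $(JA)^H=JA$; $Z$ is symplectic if $Z^HJZ=J$. $e_j$ is the $j$-th standard basis vector and $\langle u,v\rangle=v^Hu$. $\mathbb{C}^{2n\times 2n}$ is regarded as a real Euclidean space with inner product $\langle X,Y\rangle_{\mathbb{R}}=\operatorname{Re}\operatorname{tr}(X^HY)$. The function $\tilde f(Z)=\sum_j|\langle AZe_j,Ze_j\rangle|^2$ on all of $\mathbb{C}^{2n\times2n}$ is real-differentiable, with Euclidean gradient $\nabla\tilde f(Z)=\big[\partial\tilde f/\partial\operatorname{Re}z_{jk}+\imath\,\partial\tilde f/\partial\operatorname{Im}z_{jk}\big]_{j,k}$; $\operatorname{grad} f(Z)$ denotes the Riemannian gradient of the restriction $f=\tilde f|_{\mathcal{M}}$, i.e. the orthogonal projection (w.r.t. $\langle\cdot,\cdot\rangle_{\mathbb{R}}$) of $\nabla\tilde f(Z)$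 onto the tangent space $T_Z\mathcal{M}=\{ZK:\ K\text{ skew-Hermitian Hamiltonian}\}$. *)

(* Defs.v *)
From Stdlib Require Import Reals Arith Bool.
Open Scope R_scope.

Definition C : Type := (R * R)%type.
Definition Cre (z : C) : R := fst z.
Definition Cim (z : C) : R := snd z.
Definition C0 : C := (0, 0).
Definition C1 : C := (1, 0).
Definition Ci : C := (0, 1).
Definition RtoC (r : R) : C := (r, 0).
Definition Cadd (z w : C) : C := (Cre z + Cre w, Cim z + Cim w).
Definition Copp (z : C) : C := (- Cre z, - Cim z).
Definition Cmul (z w : C) : C :=
  (Cre z * Cre w - Cim z * Cim w, Cre z * Cim w + Cim z * Cre w).
Definition Cconj (z : C) : C := (Cre z, - Cim z).
Definition Cnorm2 (z : C) : R := Cre z * Cre z + Cim z * Cim z.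

Fixpoint csum (m : nat) (f : nat -> C) : C :=
  match m with O => C0 | S m' => Cadd (csum m' f) (f m') end.
Fixpoint rsum (m : nat) (f : nat -> R) : R :=
  match m with O => 0 | S m' => rsum m' f + f m' end.

(** Matrices / vectors indexed by nat; only indices < N (= 2n) are meaningful. *)
Definition Mat : Type := nat -> nat -> C.
Definition Vec : Type := nat -> C.

Definition mmul (N : nat) (A B : Mat) : Mat :=
  fun i j => csum N (fun k => Cmul (A i k) (B k j)).
Definition madd (A B : Mat) : Mat := fun i j => Cadd (A i j) (B i j).
Definition mopp (A : Mat) : Mat := fun i j => Copp (A i j).
Definition mscale (c : C) (A : Mat) : Mat := fun i j => Cmul c (A i j).
Definition adj (A : Mat) : Mat := fun i j => Cconj (A j i).
Definition Idm : Mat := fun i j => if Nat.eqb i j then C1 else C0.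
Definition mtrace (N : nat) (A : Mat) : C := csum N (fun i => A i i).
Definition matvec (N : nat) (A : Mat) (x : Vec) : Vec :=
  fun i => csum N (fun k => Cmul (A i k) (x k)).
Definition evec (j : nat) : Vec := fun i => if Nat.eqb i j then C1 else C0.
Definition Ejk (j k : nat) : Mat :=
  fun a b => if Nat.eqb a j && Nat.eqb b k then C1 else C0.

Definition meq (N : nat) (A B : Mat) : Prop :=
  forall i j, (i < N)%nat -> (j < N)%nat -> A i j = B i j.

(** J_{2n} = [[0, I_n], [-I_n, 0]] *)
Definition Jmat (n : nat) : Mat := fun i j =>
  if Nat.ltb i n && Nat.eqb j (i + n) then C1
  else if Nat.leb n i && Nat.ltb i (2 * n) && Nat.eqb (j + n) i then Copp C1
  else C0.

Definition Hamiltonian (n : nat) (A : Mat) : Prop :=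
  meq (2 * n) (adj (mmul (2 * n) (Jmat n) A)) (mmul (2 * n) (Jmat n) A).
Definition symplectic (n : nat) (Z : Mat) : Prop :=
  meq (2 * n) (mmul (2 * n) (mmul (2 * n) (adj Z) (Jmat n)) Z) (Jmat n).
Definition unitary (n : nat) (Z : Mat) : Prop :=
  meq (2 * n) (mmul (2 * n) (adj Z) Z) Idm.
Definition skew_Hermitian (n : nat) (K : Mat) : Prop :=
  meq (2 * n) (adj K) (mopp K).
Definition in_M (n : nat) (Z : Mat) : Prop := unitary n Z /\ symplectic n Z.

Definition cinner (N : nat) (u v : Vec) : C :=
  csum N (fun i => Cmul (Cconj (v i)) (u i)).

Definition ftilde (n : nat) (A Z : Mat) : R :=
  let N := (2 * n)%nat in
  rsum N (fun j =>
    Cnorm2 (cinner N (matvec N A (matvec N Z (evec j))) (matvec N Z (evec j)))).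

Definition inner_R (N : nat) (X Y : Mat) : R := Cre (mtrace N (mmul N (adj X) Y)).

Definition is_euclid_grad (n : nat) (A Z G : Mat) : Prop :=
  forall j k, (j < 2 * n)%nat -> (k < 2 * n)%nat ->
    derivable_pt_lim (fun t => ftilde n A (madd Z (mscale (RtoC t) (Ejk j k))))
                     0 (Cre (G j k)) /\
    derivable_pt_lim (fun t => ftilde n A (madd Z (mscale (Cmul Ci (RtoC t)) (Ejk j k))))
                     0 (Cim (G j k)).

Definition in_tangent (n : nat) (Z P : Mat) : Prop :=
  exists K, skew_Hermitian n K /\ Hamiltonian n K /\ meq (2 * n) P (mmul (2 * n) Z K).

(** P = grad f(Z): the orthogonal projection (w.r.t. <.,.>_R) of the
    Euclidean gradient onto T_Z M. *)
Definition is_riem_grad (n : nat) (A Z P : Mat) : Prop :=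
  exists G, is_euclid_grad n A Z G /\ in_tangent n Z P /\
    (forall Q, in_tangent n Z Q -> inner_R (2 * n) (madd G (mopp P)) Q = 0).

(* Main.v *)
Require Import Defs.
From Stdlib Require Import Reals Arith Bool Lia Lra.
Import Defs.
Open Scope R_scope.

Ltac ceq := unfold Cadd, Cmul, Copp, Cconj, C0, C1, Ci, RtoC, Cre, Cim in *;
  apply injective_projections; simpl; ring.

Lemma csum_ext m f g : (forall k, (k < m)%nat -> f k = g k) -> csum m f = csum m g.
Proof. induction m; intros H; simpl; auto. rewrite IHm, H; auto. Qed.
Lemma rsum_ext m f g : (forall k, (k < m)%nat -> f k = g k) -> rsum m f = rsum m g.
Proof. induction m; intros H; simpl; auto. rewrite IHm, H; auto. Qed.
Lemma csum_add m f g : csum m (fun k => Cadd (f k) (g k)) = Cadd (csum m f) (csum m g).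
Proof. induction m; simpl. ceq. rewrite IHm. ceq. Qed.
Lemma csum_mull m c f : csum m (fun k => Cmul c (f k)) = Cmul c (csum m f).
Proof. induction m; simpl. ceq. rewrite IHm. ceq. Qed.
Lemma csum_mulr m c f : csum m (fun k => Cmul (f k) c) = Cmul (csum m f) c.
Proof. induction m; simpl. ceq. rewrite IHm. ceq. Qed.
Lemma csum_conj m f : csum m (fun k => Cconj (f k)) = Cconj (csum m f).
Proof. induction m; simpl. ceq. rewrite IHm. ceq. Qed.
Lemma csum_zero m f : (forall k, (k < m)%nat -> f k = C0) -> csum m f = C0.
Proof. induction m; intros H; simpl; auto. rewrite IHm, H; auto. ceq. Qed.
Lemma rsum_zero m f : (forall k, (k < m)%nat -> f k = 0) -> rsum m f = 0.
Proof. induction m; intros H; simpl; auto. rewrite IHm, H; auto. ring. Qed.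
Lemma csum_delta m f p : (p < m)%nat -> (forall k, (k < m)%nat -> k <> p -> f k = C0) ->
  csum m f = f p.
Proof.
  induction m; intros Hp H; [lia|]. simpl.
  destruct (Nat.eq_dec p m).
  - subst. rewrite csum_zero. ceq. intros; apply H; lia.
  - rewrite IHm by (try lia; intros; apply H; lia). rewrite (H m) by lia. ceq.
Qed.
Lemma rsum_delta m f p : (p < m)%nat -> (forall k, (k < m)%nat -> k <> p -> f k = 0) ->
  rsum m f = f p.
Proof.
  induction m; intros Hp H; [lia|]. simpl.
  destruct (Nat.eq_dec p m).
  - subst. rewrite rsum_zero. ring. intros; apply H; lia.
  - rewrite IHm by (try lia; intros; apply H; lia). rewrite (H m) by lia. ring.
Qed.
Lemma rsum_add m f g : rsum m (fun k => f k + g k) = rsum m f + rsum m g.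
Proof. induction m; simpl. ring. rewrite IHm. ring. Qed.
Lemma rsum_sub m f g : rsum m (fun k => f k - g k) = rsum m f - rsum m g.
Proof. induction m; simpl. ring. rewrite IHm. ring. Qed.
Lemma csum_swap m p F : csum m (fun i => csum p (fun k => F i k)) =
  csum p (fun k => csum m (fun i => F i k)).
Proof.
  induction m; simpl.
  - symmetry. apply csum_zero. reflexivity.
  - rewrite IHm. rewrite <- csum_add. reflexivity.
Qed.
Lemma Cre_csum m f : Cre (csum m f) = rsum m (fun k => Cre (f k)).
Proof. induction m; simpl; auto. rewrite <- IHm. reflexivity. Qed.
Lemma Cim_csum m f : Cim (csum m f) = rsum m (fun k => Cim (f k)).
Proof. induction m; simpl; auto. rewrite <- IHm. reflexivity. Qed.

Definition cderiv (f : R -> C) (u d : C) : Prop :=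
  f 0 = u /\ derivable_pt_lim (fun t => Cre (f t)) 0 (Cre d) /\
  derivable_pt_lim (fun t => Cim (f t)) 0 (Cim d).

Lemma dpl_eq f x l l' : derivable_pt_lim f x l -> l = l' -> derivable_pt_lim f x l'.
Proof. intros H ->; exact H. Qed.

Lemma cd_eqv f u d u' d' : cderiv f u d -> u = u' -> d = d' -> cderiv f u' d'.
Proof. intros H -> ->; exact H. Qed.

Lemma cd_const c : cderiv (fun _ => c) c C0.
Proof. split; [reflexivity|split]; apply derivable_pt_lim_const. Qed.

Lemma cd_add f g u v du dv : cderiv f u du -> cderiv g v dv ->
  cderiv (fun t => Cadd (f t) (g t)) (Cadd u v) (Cadd du dv).
Proof.
  intros [H0 [H1 H2]] [G0 [G1 G2]]. split; [rewrite H0, G0; reflexivity|split].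
  - exact (derivable_pt_lim_plus _ _ _ _ _ H1 G1).
  - exact (derivable_pt_lim_plus _ _ _ _ _ H2 G2).
Qed.

Lemma cd_mul f g u v du dv : cderiv f u du -> cderiv g v dv ->
  cderiv (fun t => Cmul (f t) (g t)) (Cmul u v) (Cadd (Cmul du v) (Cmul u dv)).
Proof.
  intros [H0 [H1 H2]] [G0 [G1 G2]]. split; [rewrite H0, G0; reflexivity|split].
  - eapply dpl_eq.
    exact (derivable_pt_lim_minus _ _ _ _ _ (derivable_pt_lim_mult _ _ _ _ _ H1 G1)
            (derivable_pt_lim_mult _ _ _ _ _ H2 G2)).
    cbv beta. rewrite H0, G0. unfold Cadd, Cmul, Cre, Cim. simpl. ring.
  - eapply dpl_eq.
    exact (derivable_pt_lim_plus _ _ _ _ _ (derivable_pt_lim_mult _ _ _ _ _ H1 G2)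
            (derivable_pt_lim_mult _ _ _ _ _ H2 G1)).
    cbv beta. rewrite H0, G0. unfold Cadd, Cmul, Cre, Cim. simpl. ring.
Qed.

Lemma cd_conj f u du : cderiv f u du -> cderiv (fun t => Cconj (f t)) (Cconj u) (Cconj du).
Proof.
  intros [H0 [H1 H2]]. split; [rewrite H0; reflexivity|split].
  - exact H1.
  - exact (derivable_pt_lim_opp _ _ _ H2).
Qed.

Lemma cd_RtoC : cderiv (fun t => RtoC t) (RtoC 0) C1.
Proof. split; [reflexivity|split]. apply derivable_pt_lim_id. apply derivable_pt_lim_const. Qed.

Lemma cd_csum m (F : R -> nat -> C) F0 dF :
  (forall k, (k < m)%nat -> cderiv (fun t => F t k) (F0 k) (dF k)) ->
  cderiv (fun t => csum m (F t)) (csum m F0) (csum m dF).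
Proof.
  induction m; intros H; simpl.
  - apply cd_const.
  - apply cd_add. apply IHm; intros; apply H; lia. apply H; lia.
Qed.

Lemma rd_rsum m (F : R -> nat -> R) dF :
  (forall k, (k < m)%nat -> derivable_pt_lim (fun t => F t k) 0 (dF k)) ->
  derivable_pt_lim (fun t => rsum m (F t)) 0 (rsum m dF).
Proof.
  induction m; intros H; simpl.
  - apply derivable_pt_lim_const.
  - exact (derivable_pt_lim_plus _ _ _ _ _ (IHm ltac:(intros; apply H; lia)) (H m ltac:(lia))).
Qed.

Lemma rd_norm2 f u d : cderiv f u d ->
  derivable_pt_lim (fun t => Cnorm2 (f t)) 0 (2 * (Cre u * Cre d + Cim u * Cim d)).
Proof.
  intros [H0 [H1 H2]]. eapply dpl_eq.
  exact (derivable_pt_lim_plus _ _ _ _ _ (derivable_pt_lim_mult _ _ _ _ _ H1 H1)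
            (derivable_pt_lim_mult _ _ _ _ _ H2 H2)).
  cbv beta. rewrite H0. ring.
Qed.

Lemma cd_matvec_const N M (x : R -> Vec) x0 dx :
  (forall k, (k < N)%nat -> cderiv (fun t => x t k) (x0 k) (dx k)) ->
  forall i, cderiv (fun t => matvec N M (x t) i) (matvec N M x0 i) (matvec N M dx i).
Proof.
  intros H i. unfold matvec.
  eapply cd_eqv. apply (cd_csum N (fun t k => Cmul (M i k) (x t k))).
  intros k Hk. apply cd_mul. apply cd_const. apply H; auto.
  reflexivity. apply csum_ext; intros; ceq.
Qed.

Lemma cd_matvec_var N (Mt : R -> Mat) M0 dM x :
  (forall i k, (i < N)%nat -> (k < N)%nat -> cderiv (fun t => Mt t i k) (M0 i k) (dM i k)) ->
  forall i, (i < N)%nat -> cderiv (fun t => matvec N (Mt t) x i) (matvec N M0 x i) (matvec N dM x i).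
Proof.
  intros H i Hi. unfold matvec.
  eapply cd_eqv. apply (cd_csum N (fun t k => Cmul (Mt t i k) (x k))).
  intros k Hk. apply cd_mul. apply H; auto. apply cd_const.
  reflexivity. apply csum_ext; intros; ceq.
Qed.

Definition dd (N : nat) (A Z E : Mat) (j : nat) : C :=
  csum N (fun i => Cadd (Cmul (Cconj (matvec N E (evec j) i)) (matvec N A (matvec N Z (evec j)) i))
                        (Cmul (Cconj (matvec N Z (evec j) i)) (matvec N A (matvec N E (evec j)) i))).
Definition cc (N : nat) (A Z : Mat) (j : nat) : C :=
  cinner N (matvec N A (matvec N Z (evec j))) (matvec N Z (evec j)).
Definition Lf (N : nat) (A Z E : Mat) : R :=
  rsum N (fun j => 2 * (Cre (cc N A Z j) * Cre (dd N A Z E j) + Cim (cc N A Z j) * Cim (dd N A Z E j))).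

Lemma ftilde_deriv n A Z (Zt : R -> Mat) E :
  (forall a b, (a < 2 * n)%nat -> (b < 2 * n)%nat -> cderiv (fun t => Zt t a b) (Z a b) (E a b)) ->
  derivable_pt_lim (fun t => ftilde n A (Zt t)) 0 (Lf (2 * n) A Z E).
Proof.
  intros H. unfold ftilde, Lf.
  apply (rd_rsum (2 * n) (fun t j => Cnorm2 (cinner (2 * n) (matvec (2 * n) A (matvec (2 * n) (Zt t) (evec j))) (matvec (2 * n) (Zt t) (evec j))))).
  intros j Hj. apply rd_norm2. unfold cinner, cc, cinner, dd.
  set (N := (2 * n)%nat) in *.
  assert (Hv : forall i, (i < N)%nat -> cderiv (fun t => matvec N (Zt t) (evec j) i)
     (matvec N Z (evec j) i) (matvec N E (evec j) i)).
  { intros i Hi. apply cd_matvec_var; auto. }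
  apply (cd_csum N (fun t i => Cmul (Cconj (matvec N (Zt t) (evec j) i))
                                    (matvec N A (matvec N (Zt t) (evec j)) i))).
  intros i Hi. apply cd_mul. apply cd_conj. apply Hv; auto.
  apply cd_matvec_const. intros k Hk. apply Hv; auto.
Qed.

Lemma matvec_ext N M x y i : (forall k, (k < N)%nat -> x k = y k) -> matvec N M x i = matvec N M y i.
Proof. intros H. unfold matvec. apply csum_ext. intros; rewrite H; auto. Qed.
Lemma matvec_madd N E F x i : matvec N (madd E F) x i = Cadd (matvec N E x i) (matvec N F x i).
Proof. unfold matvec. rewrite <- csum_add. apply csum_ext; intros; unfold madd; ceq. Qed.
Lemma matvec_mscale N c E x i : matvec N (mscale c E) x i = Cmul c (matvec N E x i).
Proof. unfold matvec. rewrite <- csum_mull. apply csum_ext; intros; unfold mscale; ceq. Qed.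
Lemma matvec_vadd N M x y i : matvec N M (fun k => Cadd (x k) (y k)) i = Cadd (matvec N M x i) (matvec N M y i).
Proof. unfold matvec. rewrite <- csum_add. apply csum_ext; intros; ceq. Qed.
Lemma matvec_vscale N M c x i : matvec N M (fun k => Cmul c (x k)) i = Cmul c (matvec N M x i).
Proof. unfold matvec. rewrite <- csum_mull. apply csum_ext; intros; ceq. Qed.
Lemma matvec_mzero N x i : matvec N (fun _ _ => C0) x i = C0.
Proof. unfold matvec. apply csum_zero. intros; ceq. Qed.
Lemma matvec_mext N E F x i : (i < N)%nat -> meq N E F -> matvec N E x i = matvec N F x i.
Proof. intros Hi H. unfold matvec. apply csum_ext. intros; rewrite H; auto. Qed.

Lemma dd_add N A Z E F j : dd N A Z (madd E F) j = Cadd (dd N A Z E j) (dd N A Z F j).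
Proof.
  unfold dd. rewrite <- csum_add. apply csum_ext. intros i Hi.
  rewrite matvec_madd.
  rewrite (matvec_ext N A (matvec N (madd E F) (evec j)) (fun k => Cadd (matvec N E (evec j) k) (matvec N F (evec j) k)))
    by (intros; apply matvec_madd).
  rewrite matvec_vadd. ceq.
Qed.
Lemma dd_scale N A Z E r j : dd N A Z (mscale (RtoC r) E) j = Cmul (RtoC r) (dd N A Z E j).
Proof.
  unfold dd. rewrite <- csum_mull. apply csum_ext. intros i Hi.
  rewrite matvec_mscale.
  rewrite (matvec_ext N A (matvec N (mscale (RtoC r) E) (evec j)) (fun k => Cmul (RtoC r) (matvec N E (evec j) k)))
    by (intros; apply matvec_mscale).
  rewrite matvec_vscale. ceq.
Qed.
Lemma dd_zero N A Z j : dd N A Z (fun _ _ => C0) j = C0.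
Proof.
  unfold dd. apply csum_zero. intros i Hi.
  rewrite matvec_mzero.
  rewrite (matvec_ext N A (matvec N (fun _ _ => C0) (evec j)) (fun k => Cmul C0 (matvec N A (evec j) k)))
    by (intros; rewrite matvec_mzero; ceq).
  rewrite matvec_vscale. ceq.
Qed.
Lemma dd_ext N A Z E F j : meq N E F -> dd N A Z E j = dd N A Z F j.
Proof.
  intros H. unfold dd. apply csum_ext. intros i Hi.
  rewrite (matvec_mext N E F _ i Hi H).
  rewrite (matvec_ext N A (matvec N E (evec j)) (matvec N F (evec j))) by (intros; apply matvec_mext; auto).
  reflexivity.
Qed.

Lemma Lf_add N A Z E F : Lf N A Z (madd E F) = Lf N A Z E + Lf N A Z F.
Proof. unfold Lf. rewrite <- rsum_add. apply rsum_ext; intros. rewrite dd_add. unfold Cadd, Cre, Cim; simpl. ring. Qed.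
Lemma rsum_scal m r f : rsum m (fun k => r * f k) = r * rsum m f.
Proof. induction m; simpl. ring. rewrite IHm. ring. Qed.
Lemma Lf_scale N A Z E r : Lf N A Z (mscale (RtoC r) E) = r * Lf N A Z E.
Proof. unfold Lf. rewrite <- rsum_scal. apply rsum_ext; intros. rewrite dd_scale. unfold Cmul, RtoC, Cre, Cim; simpl. ring. Qed.
Lemma Lf_zero N A Z : Lf N A Z (fun _ _ => C0) = 0.
Proof. unfold Lf. apply rsum_zero; intros. rewrite dd_zero. unfold C0, Cre, Cim; simpl. ring. Qed.
Lemma Lf_ext N A Z E F : meq N E F -> Lf N A Z E = Lf N A Z F.
Proof. intros H. unfold Lf. apply rsum_ext; intros. rewrite (dd_ext N A Z E F k H). reflexivity. Qed.

Fixpoint msum (m : nat) (F : nat -> Mat) : Mat :=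
  match m with O => fun _ _ => C0 | S m' => madd (msum m' F) (F m') end.
Lemma msum_entry m F x y : msum m F x y = csum m (fun i => F i x y).
Proof. induction m; simpl; auto. unfold madd. rewrite IHm. reflexivity. Qed.
Lemma Lf_msum N A Z m F : Lf N A Z (msum m F) = rsum m (fun i => Lf N A Z (F i)).
Proof. induction m; simpl. apply Lf_zero. rewrite Lf_add, IHm. reflexivity. Qed.

Lemma inner_R_expand N X Y : inner_R N X Y =
  rsum N (fun i => rsum N (fun k => Cre (X k i) * Cre (Y k i) + Cim (X k i) * Cim (Y k i))).
Proof.
  unfold inner_R, mtrace, mmul. rewrite Cre_csum. apply rsum_ext; intros.
  rewrite Cre_csum. apply rsum_ext; intros. unfold adj, Cmul, Cconj, Cre, Cim; simpl. ring.
Qed.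

Lemma W_decomp N (W : Mat) : meq N W (msum N (fun i => msum N (fun k =>
   madd (mscale (RtoC (Cre (W k i))) (Ejk k i)) (mscale (RtoC (Cim (W k i))) (mscale Ci (Ejk k i)))))).
Proof.
  intros x y Hx Hy. rewrite msum_entry.
  rewrite (csum_delta N _ y Hy).
  - rewrite msum_entry. rewrite (csum_delta N _ x Hx).
    + unfold madd, mscale, Ejk. rewrite !Nat.eqb_refl. simpl. ceq.
    + intros k Hk Hkx. unfold madd, mscale, Ejk.
      destruct (Nat.eqb_spec x k); [lia|]. simpl. ceq.
  - intros i Hi Hiy. rewrite msum_entry. apply csum_zero. intros k Hk.
    unfold madd, mscale, Ejk. destruct (Nat.eqb_spec y i); [lia|].
    rewrite andb_false_r. ceq.
Qed.

Lemma grad_entries n A Z G : is_euclid_grad n A Z G -> forall a b, (a < 2 * n)%nat -> (b < 2 * n)%nat ->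
  Cre (G a b) = Lf (2 * n) A Z (Ejk a b) /\ Cim (G a b) = Lf (2 * n) A Z (mscale Ci (Ejk a b)).
Proof.
  intros HG a b Ha Hb. destruct (HG a b Ha Hb) as [H1 H2]. split.
  - eapply uniqueness_limite. exact H1.
    apply (ftilde_deriv n A Z (fun t => madd Z (mscale (RtoC t) (Ejk a b)))).
    intros x y _ _. unfold madd, mscale.
    eapply cd_eqv.
    apply (cd_add (fun _ => Z x y) (fun t => Cmul (RtoC t) (Ejk a b x y))).
    apply cd_const. apply cd_mul. apply cd_RtoC. apply cd_const.
    ceq. ceq.
  - eapply uniqueness_limite. exact H2.
    apply (ftilde_deriv n A Z (fun t => madd Z (mscale (Cmul Ci (RtoC t)) (Ejk a b)))).
    intros x y _ _. unfold madd, mscale.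
    eapply cd_eqv.
    apply (cd_add (fun _ => Z x y) (fun t => Cmul (Cmul Ci (RtoC t)) (Ejk a b x y))).
    apply cd_const. apply cd_mul. apply (cd_mul (fun _ => Ci) (fun t => RtoC t)).
    apply cd_const. apply cd_RtoC. apply cd_const.
    ceq. ceq.
Qed.

Lemma grad_inner n A Z G W : is_euclid_grad n A Z G ->
  inner_R (2 * n) G W = Lf (2 * n) A Z W.
Proof.
  intros HG. rewrite inner_R_expand.
  rewrite (Lf_ext _ A Z _ _ (W_decomp (2 * n) W)).
  rewrite Lf_msum. apply rsum_ext. intros i Hi.
  rewrite Lf_msum. apply rsum_ext. intros k Hk.
  rewrite Lf_add, !Lf_scale.
  destruct (grad_entries n A Z G HG k i Hk Hi) as [-> ->]. ring.
Qed.

Definition sfun (n p i : nat) : C := if Nat.eqb i p || Nat.eqb i (p + n)%nat then Ci else C0.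
Definition Qm (n p : nat) : Mat := fun a b => if Nat.eqb a b then sfun n p a else C0.

Lemma JK n K a b : (a < 2 * n)%nat ->
  mmul (2 * n) (Jmat n) K a b = if Nat.ltb a n then K (a + n)%nat b else Copp (K (a - n)%nat b).
Proof.
  intros Ha. unfold mmul. destruct (Nat.ltb_spec a n).
  - rewrite (csum_delta _ _ (a + n)%nat) by (try lia; intros k Hk Hkn; unfold Jmat;
      destruct (Nat.ltb_spec a n); try lia; destruct (Nat.eqb_spec k (a + n)%nat); try lia;
      destruct (Nat.leb_spec n a); try lia; simpl; ceq).
    unfold Jmat. destruct (Nat.ltb_spec a n); try lia. rewrite Nat.eqb_refl. simpl. ceq.
  - rewrite (csum_delta _ _ (a - n)%nat) by (try lia; intros k Hk Hkn; unfold Jmat;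
      destruct (Nat.ltb_spec a n); try lia; destruct (Nat.leb_spec n a); try lia;
      destruct (Nat.ltb_spec a (2 * n)%nat); try lia; destruct (Nat.eqb_spec (k + n)%nat a); try lia;
      simpl; ceq).
    unfold Jmat. destruct (Nat.ltb_spec a n); try lia. destruct (Nat.leb_spec n a); try lia;
      destruct (Nat.ltb_spec a (2 * n)%nat); try lia; destruct (Nat.eqb_spec (a - n + n)%nat a); try lia.
    simpl. ceq.
Qed.

Ltac natcases := repeat match goal with
  | |- context [Nat.eqb ?a ?b] => destruct (Nat.eqb_spec a b)
  | |- context [Nat.ltb ?a ?b] => destruct (Nat.ltb_spec a b)
  end.

Lemma Q_skew n p : skew_Hermitian n (Qm n p).
Proof.
  intros a b Ha Hb. unfold adj, mopp, Qm, sfun. natcases; simpl; try lia; try ceq.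
Qed.

Lemma Q_ham n p : (p < n)%nat -> Hamiltonian n (Qm n p).
Proof.
  intros Hp a b Ha Hb. unfold adj. rewrite !JK by auto. unfold Qm, sfun.
  natcases; simpl; try lia; try ceq.
Qed.

Lemma W_entry n p Z k i : (i < 2 * n)%nat ->
  mmul (2 * n) Z (Qm n p) k i = Cmul (Z k i) (sfun n p i).
Proof.
  intros Hi. unfold mmul. rewrite (csum_delta _ _ i Hi).
  unfold Qm. rewrite Nat.eqb_refl. reflexivity.
  intros c Hc Hci. unfold Qm. destruct (Nat.eqb_spec c i); [lia|]. ceq.
Qed.

Lemma matvec_evec N M j i : (j < N)%nat -> matvec N M (evec j) i = M i j.
Proof.
  intros Hj. unfold matvec. rewrite (csum_delta _ _ j Hj).
  unfold evec. rewrite Nat.eqb_refl. ceq.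
  intros k Hk Hkj. unfold evec. destruct (Nat.eqb_spec k j); [lia|]. ceq.
Qed.

Lemma Lf_W n p A Z : Lf (2 * n) A Z (mmul (2 * n) Z (Qm n p)) = 0.
Proof.
  unfold Lf. apply rsum_zero. intros m Hm.
  assert (Hd : dd (2 * n) A Z (mmul (2 * n) Z (Qm n p)) m = C0).
  { unfold dd. apply csum_zero. intros i Hi.
    set (N := (2 * n)%nat) in *.
    set (v := matvec N Z (evec m)).
    assert (Hw : forall k, (k < N)%nat -> matvec N (mmul N Z (Qm n p)) (evec m) k = Cmul (sfun n p m) (v k)).
    { intros k Hk. unfold v. rewrite !matvec_evec by auto. unfold N. rewrite W_entry by auto. ceq. }
    rewrite (matvec_ext N A (matvec N (mmul N Z (Qm n p)) (evec m)) (fun k => Cmul (sfun n p m) (v k))) by auto.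
    rewrite matvec_vscale. rewrite Hw by auto.
    unfold sfun. destruct (_ || _); ceq. }
  rewrite Hd. unfold C0, Cre, Cim; simpl. ring.
Qed.

Lemma UK n Z K i : unitary n Z -> (i < 2 * n)%nat ->
  csum (2 * n) (fun k => Cmul (Cconj (Z k i)) (mmul (2 * n) Z K k i)) = K i i.
Proof.
  intros HU Hi. set (N := (2 * n)%nat) in *. unfold mmul.
  rewrite (csum_ext _ _ (fun k => csum N (fun c => Cmul (Cconj (Z k i)) (Cmul (Z k c) (K c i)))))
    by (intros; rewrite csum_mull; reflexivity).
  rewrite csum_swap.
  rewrite (csum_ext _ _ (fun c => Cmul (csum N (fun k => Cmul (Cconj (Z k i)) (Z k c))) (K c i)))
    by (intros; rewrite <- csum_mulr; apply csum_ext; intros; ceq).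
  rewrite (csum_ext _ _ (fun c => Cmul (Idm i c) (K c i)))
    by (intros c Hc; f_equal; apply (HU i c Hi Hc)).
  rewrite (csum_delta _ _ i Hi). unfold Idm. rewrite Nat.eqb_refl. ceq.
  intros c Hc Hci. unfold Idm. destruct (Nat.eqb_spec i c); [lia|]. ceq.
Qed.

Lemma rsum_two m f p q : (p < m)%nat -> (q < m)%nat -> p <> q ->
  (forall k, (k < m)%nat -> k <> p -> k <> q -> f k = 0) -> rsum m f = f p + f q.
Proof.
  intros Hp Hq Hpq H.
  rewrite (rsum_ext m f (fun k => (if Nat.eqb k p then f k else 0) + (if Nat.eqb k q then f k else 0))).
  - rewrite rsum_add. rewrite (rsum_delta m _ p Hp), (rsum_delta m _ q Hq).
    + rewrite !Nat.eqb_refl. destruct (Nat.eqb_spec p q); destruct (Nat.eqb_spec q p); try lia. ring.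
    + intros k _ Hk. destruct (Nat.eqb_spec k q); [lia|reflexivity].
    + intros k _ Hk. destruct (Nat.eqb_spec k p); [lia|reflexivity].
  - intros k Hk. destruct (Nat.eqb_spec k p); destruct (Nat.eqb_spec k q); subst; try lia; try ring.
    rewrite H by auto. ring.
Qed.

Lemma inner_sub N X Y W : inner_R N (madd X (mopp Y)) W = inner_R N X W - inner_R N Y W.
Proof.
  rewrite !inner_R_expand. rewrite <- rsum_sub. apply rsum_ext; intros.
  rewrite <- rsum_sub. apply rsum_ext; intros. unfold madd, mopp, Cadd, Copp, Cre, Cim; simpl. ring.
Qed.

Lemma key n A Z P G K p : unitary n Z -> is_euclid_grad n A Z G ->
  meq (2 * n) P (mmul (2 * n) Z K) ->
  (forall Q, in_tangent n Z Q -> inner_R (2 * n) (madd G (mopp P)) Q = 0) ->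
  (p < n)%nat -> Cim (K p p) + Cim (K (p + n)%nat (p + n)%nat) = 0.
Proof.
  intros HU HG HPK Horth Hp.
  set (N := (2 * n)%nat).
  set (W := mmul N Z (Qm n p)).
  assert (H0 : inner_R N (madd G (mopp P)) W = 0).
  { apply Horth. exists (Qm n p). split; [apply Q_skew|split; [apply Q_ham; auto|]].
    intros a b _ _. reflexivity. }
  rewrite inner_sub in H0. unfold N in H0 at 1. rewrite (grad_inner n A Z G W HG) in H0.
  unfold W in H0. rewrite Lf_W in H0.
  assert (HP : inner_R N P W = 0) by (unfold W; lra). clear H0.
  unfold inner_R, mtrace in HP. rewrite Cre_csum in HP.
  rewrite (rsum_ext N _ (fun i => Cre (Cmul (Cconj (K i i)) (sfun n p i)))) in HP.
  - rewrite (rsum_two N _ p (p + n)%nat) in HP; try (unfold N; lia).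
    + unfold sfun in HP. rewrite !Nat.eqb_refl in HP.
      destruct (Nat.eqb_spec (p + n) p); [lia|]. rewrite orb_true_r in HP. simpl in HP.
      unfold Cmul, Cconj, Ci, Cre, Cim in *; simpl in *. lra.
    + intros k Hk H1 H2. unfold sfun. destruct (Nat.eqb_spec k p); [lia|].
      destruct (Nat.eqb_spec k (p + n)); [lia|]. simpl. unfold Cmul, Cre, C0; simpl; ring.
  - intros i Hi. f_equal. unfold mmul at 1, adj.
    rewrite (csum_ext _ _ (fun k => Cmul (Cconj (Cmul (Cconj (Z k i)) (mmul N Z K k i))) (sfun n p i))).
    + rewrite csum_mulr, csum_conj. unfold N. rewrite UK; auto.
    + intros k Hk. unfold W, N. rewrite W_entry by auto. rewrite HPK by auto. ceq.
Qed.

Theorem lemma4p2 (n : nat) (A Z P : Mat) :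
  Hamiltonian n A -> in_M n Z -> is_riem_grad n A Z P ->
  exists X, skew_Hermitian n X /\ Hamiltonian n X /\
    (forall j, (j < 2 * n)%nat -> X j j = C0) /\
    meq (2 * n) P (mmul (2 * n) Z X).
Proof.
  intros HA [HU _] [G [HG [[K [HKs [HKh HPK]]] Horth]]].
  exists K. split; [auto|split; [auto|split; [|auto]]].
  assert (Hk : forall p, (p < n)%nat -> K p p = C0 /\ K (p + n)%nat (p + n)%nat = C0).
  { intros p Hp.
    pose proof (key n A Z P G K p HU HG HPK Horth Hp) as H1.
    pose proof (HKh p (p + n)%nat ltac:(lia) ltac:(lia)) as H2.
    unfold adj in H2. rewrite !JK in H2 by lia.
    destruct (Nat.ltb_spec (p + n) n); [lia|]. destruct (Nat.ltb_spec p n); [|lia].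
    rewrite Nat.add_sub in H2.
    pose proof (HKs p p ltac:(lia) ltac:(lia)) as H3. unfold adj, mopp in H3.
    destruct (K p p) as [x y]. destruct (K (p + n)%nat (p + n)%nat) as [x' y'].
    unfold Cconj, Copp, Cre, Cim, C0 in *; simpl in *.
    injection H2; injection H3; intros. split; f_equal; lra. }
  intros j Hj. destruct (Nat.ltb_spec j n).
  - apply (Hk j); auto.
  - replace j with ((j - n) + n)%nat by lia. apply (Hk (j - n)%nat). lia.
Qed.
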